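(* Let $\gamma>0$, let $\mathscr U\subset\mathbb{T}^2\times(0,T)$ be open and $p:\mathscr U\to\mathbb{R}$ continuous and bounded. Then the map $(x,t)\mapsto K_{\gamma,(x,t)}$ is continuous on $\mathscr U$ with respect to the Hausdorff metric, and $\bigcup_{(x,t)\in\mathscr U}K_{\gamma,(x,t)}$ is bounded.
   Context: $\mathcal S_0^{2\times2}$ is the space of traceless symmetric $2\times2$ matrices, $Z:=\mathbb{R}^2\times\mathbb{R}^2\times\mathcal S_0^{2\times2}\times\mathbb{R}$ with elements $(v,m,\sigma,e)$ and Euclidean metric; $K_{\gamma,(x,t)}:=\{z\in Z: v\otimes v-\sigma=e\,\mathrm{Id},\ m=(e+p(x,t))v,\ e\le\gamma\}$. *)

(* Defs.v *)
From HB Require Import structures.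
From mathcomp Require Import all_boot all_order all_algebra.
From mathcomp Require Import all_classical all_reals all_analysis.
Set Implicit Arguments. Unset Strict Implicit. Unset Printing Implicit Defensive.
Import Order.TTheory GRing.Theory Num.Theory.
Import numFieldNormedType.Exports.
Local Open Scope classical_set_scope.
Local Open Scope ring_scope.

Section Defs.
Variable R : realType.

(* Z = R^2 x R^2 x S_0^{2x2} x R ; elements (v, m, sigma, e).
   v, m are row vectors; sigma is a 2x2 matrix, membership in S_0
   (symmetric, traceless) is imposed in the definition of K. *)
Definition Z := ('rV[R]_2 * 'rV[R]_2 * 'M[R]_2 * R)%type.

Definition sqnorm m n (u : 'M[R]_(m, n)) : R := \sum_i \sum_j (u i j) ^+ 2.

Definition zdist (z w : Z) : R :=
  let '(v, m, s, e) := z in let '(v', m', s', e') := w in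
  Num.sqrt (sqnorm (v - v') + sqnorm (m - m') + sqnorm (s - s') + (e - e') ^+ 2).

Definition zero_Z : Z := (0, 0, 0, 0).

Definition hausdorff (A B : set Z) : \bar R :=
  maxe (ereal_sup [set ereal_inf [set (zdist a b)%:E | b in B] | a in A])
       (ereal_sup [set ereal_inf [set (zdist a b)%:E | a in A] | b in B]).

(* K_{gamma,(x,t)} with pressure p; v (x) v = v^T *m v for a row vector v *)
Definition Kset (p : 'rV[R]_2 * R -> R) (gamma : R) (q : 'rV[R]_2 * R) : set Z :=
  [set z | let '(v, m, s, e) := z in
     [/\ s^T = s, \tr s = 0,
         v^T *m v - s = e%:M,
         m = (e + p q) *: v & e <= gamma]].

(* integer translates, used to encode the torus T^2 = R^2 / Z^2 *)
Definition ztrans (k : 'rV[int]_2) : 'rV[R]_2 := map_mx (fun a : int => a%:~R) k.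

End Defs.

(* Main.v *)
Require Import Defs.
From HB Require Import structures.
From mathcomp Require Import all_boot all_order all_algebra.
From mathcomp Require Import all_classical all_reals all_analysis.
From mathcomp Require Import lra ring.
Import Order.TTheory GRing.Theory Num.Theory.
Import numFieldNormedType.Exports.
Local Open Scope classical_set_scope.
Local Open Scope ring_scope.
Set Implicit Arguments.

Section H.
Variable R : realType.

Lemma sqnorm_rV (v : 'rV[R]_2) : sqnorm v = v ord0 0 ^+ 2 + v ord0 1 ^+ 2.
Proof.
rewrite /sqnorm big_ord1 !big_ord_recr big_ord0 /= add0r.
by congr (v _ _ ^+ 2 + v _ _ ^+ 2); apply: val_inj.
Qed.

Lemma sqnorm_M (s : 'M[R]_2) : sqnorm s = s 0 0 ^+ 2 + s 0 1 ^+ 2 + (s 1 0 ^+ 2 + s 1 1 ^+ 2).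
Proof.
rewrite /sqnorm !big_ord_recr !big_ord0 /= !add0r.
by congr (s _ _ ^+ 2 + s _ _ ^+ 2 + (s _ _ ^+ 2 + s _ _ ^+ 2)); apply: val_inj.
Qed.

Lemma K_facts (p : 'rV[R]_2 * R -> R) g q v m s e :
  Kset p g q (v, m, s, e) ->
  [/\ sqnorm v = 2 * e, sqnorm s = 2 * e ^+ 2, m = (e + p q) *: v & e <= g].
Proof.
move=> [sT trs H -> eg]; split => //.
- have h00 := congr1 (fun M : 'M[R]_2 => M 0 0) H.
  have h11 := congr1 (fun M : 'M[R]_2 => M 1 1) H.
  move: trs; rewrite /mxtrace !big_ord_recr big_ord0 /= add0r => trs.
  have {}trs : s 0 0 + s 1 1 = 0 by rewrite -trs; congr (s _ _ + s _ _); apply: val_inj.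
  move: h00 h11; rewrite !mxE !big_ord1 !mxE /= !mulr1n ?mulr0n => h00 h11.
  rewrite sqnorm_rV !expr2; lra.
- have h00 := congr1 (fun M : 'M[R]_2 => M 0 0) H.
  have h11 := congr1 (fun M : 'M[R]_2 => M 1 1) H.
  have h01 := congr1 (fun M : 'M[R]_2 => M 0 1) H.
  have h10 := congr1 (fun M : 'M[R]_2 => M 1 0) H.
  move: trs; rewrite /mxtrace !big_ord_recr big_ord0 /= add0r => trs.
  have {}trs : s 0 0 + s 1 1 = 0 by rewrite -trs; congr (s _ _ + s _ _); apply: val_inj.
  move: h00 h11 h01 h10; rewrite !mxE !big_ord1 !mxE /= !mulr1n ?mulr0n => h00 h11 h01 h10.
  rewrite sqnorm_M.
  have -> : s 0 0 = v ord0 0 ^+ 2 - e by rewrite expr2; lra.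
  have -> : s 1 1 = v ord0 1 ^+ 2 - e by rewrite expr2; lra.
  have -> : s 0 1 = v ord0 0 * v ord0 1 by lra.
  have -> : s 1 0 = v ord0 0 * v ord0 1 by lra.
  have he : e = (v ord0 0 ^+ 2 + v ord0 1 ^+ 2) / 2 by rewrite !expr2; lra.
  by rewrite he; field.
Qed.

Lemma sqnormZ m n c (u : 'M[R]_(m, n)) : sqnorm (c *: u) = c ^+ 2 * sqnorm u.
Proof.
rewrite /sqnorm mulr_sumr; apply: eq_bigr => i _; rewrite mulr_sumr.
by apply: eq_bigr => j _; rewrite mxE exprMn.
Qed.

Lemma sqnorm0 m n : sqnorm (0 : 'M[R]_(m, n)) = 0.
Proof. by rewrite -(scale0r (0 : 'M[R]_(m, n))) sqnormZ expr0n mul0r. Qed.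

Lemma sqnormN m n (u : 'M[R]_(m, n)) : sqnorm (- u) = sqnorm u.
Proof. by rewrite -scaleN1r sqnormZ sqrrN expr1n mul1r. Qed.

Lemma zdistC (z w : Z R) : zdist z w = zdist w z.
Proof.
case: z => [[[v m] s] e]; case: w => [[[v' m'] s'] e'] /=.
by rewrite -(opprB v) -(opprB m) -(opprB s) -(opprB e) !sqnormN sqrrN.
Qed.

Lemma approx (p : 'rV[R]_2 * R -> R) g q q' a : Kset p g q a ->
  exists2 b, Kset p g q' b & zdist a b <= `|p q - p q'| * Num.sqrt (2 * g).
Proof.
case: a => [[[v m] s] e] Ka.
have [hv _ hm eg] := K_facts Ka.
exists (v, (e + p q') *: v, s, e).
  by case: Ka => *; split.
rewrite /= !subrr !sqnorm0 hm -scalerBl sqnormZ expr0n /= addr0 add0r addr0.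
have -> : e + p q - (e + p q') = p q - p q' by ring.
rewrite sqrtrM ?sqr_ge0 // sqrtr_sqr ler_wpM2l // ler_sqrt.
  by rewrite hv; lra.
have e0 : 0 <= e.
  move: hv; rewrite sqnorm_rV => hv.
  have := sqr_ge0 (v ord0 0); have := sqr_ge0 (v ord0 1); lra.
lra.
Qed.

Lemma haus_le (A B : set (Z R)) X :
  (forall a, A a -> exists2 b, B b & zdist a b <= X) ->
  (forall b, B b -> exists2 a, A a & zdist b a <= X) ->
  (hausdorff A B <= X%:E)%E.
Proof.
move=> hA hB; rewrite /hausdorff ge_max; apply/andP; split.
  apply: ge_ereal_sup => _ [a Aa <-].
  have [b Bb hb] := hA a Aa.
  apply: le_trans (_ : (zdist a b)%:E <= X%:E)%E; last by rewrite lee_fin.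
  by apply: ereal_inf_lbound; exists b.
apply: ge_ereal_sup => _ [b Bb <-].
have [a Aa ha] := hB b Bb.
apply: le_trans (_ : (zdist a b)%:E <= X%:E)%E; last by rewrite lee_fin zdistC.
by apply: ereal_inf_lbound; exists a.
Qed.
End H.

Theorem lemma2p12 (R : realType) (T gamma : R) (U : set ('rV[R]_2 * R))
  (p : 'rV[R]_2 * R -> R) :
  0 < gamma ->
  (* U is (the lift of) an open subset of T^2 x (0,T) *)
  open U ->
  (forall q, U q -> 0 < q.2 < T) ->
  (forall (k : 'rV[int]_2) x t, U (x, t) <-> U (x + ztrans R k, t)) ->
  (* p is (the lift of) a continuous bounded function on U *)
  (forall (k : 'rV[int]_2) x t, U (x, t) -> p (x + ztrans R k, t) = p (x, t)) ->
  {within U, continuous p} ->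
  (exists M : R, forall q, U q -> `|p q| <= M) ->
  (forall q, U q -> forall eps : R, 0 < eps ->
     \forall q' \near q, U q' -> (hausdorff (Kset p gamma q) (Kset p gamma q') < eps%:E)%E)
  /\
  (exists B : R, forall q, U q -> forall z, Kset p gamma q z -> zdist z (zero_Z R) <= B).
Proof.
move=> g0 oU _ _ _ pc [M hM]; split.
  move=> q Uq eps eps0.
  set c := Num.sqrt (2 * gamma).
  have c0 : 0 < c by rewrite sqrtr_gt0; lra.
  have pcq : {for q, continuous p}.
    by rewrite continuous_open_subspace // in pc; apply: pc; rewrite inE.
  have e0 : 0 < eps / (2 * c) by rewrite divr_gt0 // mulr_gt0.
  have := (cvgrPdist_lt _ _).1 pcq _ e0; move=> /(_ _) H; apply: filterS H.
  move=> q' hq' _.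
  apply: le_lt_trans (haus_le _ _ (`|p q - p q'| * c) _ _) _.
  - by move=> a Ka; exact: approx.
  - move=> b Kb; have [a Ka h] := @approx _ p gamma q' q _ Kb; exists a => //; by rewrite distrC.
  rewrite lte_fin.
  have : `|p q - p q'| * c < eps / (2 * c) * c by rewrite ltr_pM2r.
  have -> : eps / (2 * c) * c = eps / 2 by field; rewrite gt_eqF.
  lra.
have hg := sqrtr_ge0 (2 * gamma).
exists (Num.sqrt (2 * gamma + (gamma + M) ^+ 2 * (2 * gamma) + 2 * gamma ^+ 2 + gamma ^+ 2)).
move=> q Uq [[[v m] s] e] Kz.
have [hv hs hm eg] := K_facts Kz.
have e0 : 0 <= e.
  move: hv; rewrite sqnorm_rV => hv.
  have := sqr_ge0 (v ord0 0); have := sqr_ge0 (v ord0 1); lra.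
rewrite /zdist /zero_Z !subr0 hm sqnormZ hv hs ler_sqrt; last first.
  have := hM q Uq; have := normr_ge0 (p q); nra.
have := hM q Uq; rewrite ler_norml => /andP [h1 h2].
have h3 : (e + p q) ^+ 2 <= (gamma + M) ^+ 2 by rewrite !expr2; nra.
have h4 : (e + p q) ^+ 2 * (2 * e) <= (gamma + M) ^+ 2 * (2 * gamma).
  apply: le_trans (_ : (gamma + M) ^+ 2 * (2 * e) <= _).
    by rewrite ler_wpM2r //; lra.
  by rewrite ler_wpM2l ?sqr_ge0 //; lra.
rewrite !expr2 in h4 *; nra.
Qed.
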